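(* For every integer $k\ge1$: (a) every graph $G$ with $\mathrm{adim}(G)=k$ has clique number at most $2^k$; (b) every graph $G$ with $\mathrm{bdim}(G)=k$ has clique number at most $2^k$; (c) there exists a graph $G$ with $\mathrm{adim}(G)=\mathrm{bdim}(G)=k$ whose clique number is exactly $2^k$.
   Context: $d(x,y)$ is the length of a shortest $x$–$y$ path, with $d(x,y)=\infty$ if $x,y$ lie in different components. For an integer $k\ge1$ let $d_k(x,y)=\min\{d(x,y),k+1\}$. A set $A\subseteq V(G)$ is an adjacency resolving set if for all distinct $x,y\in V(G)$ there is $z\in A$ with $d_1(x,z)\ne d_1(y,z)$. The adjacency dimension $\mathrm{adim}(G)$ is the minimum size of an adjacency resolving set. A function $f:V(G)\to\mathbb{Z}_{\ge 0}$ is a resolving broadcast of $G$ if for all distinct $x,y\in V(G)$ there is $z\in V(G)$ with $f(z)=i>0$ and $d_i(x,z)\ne d_i(y,z)$. The broadcast dimension $\mathrm{bdim}(G)$ is the minimum of $\sum_{v\in V(G)}f(v)$ over all resolving broadcasts $f$ of $G$. *)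

(* Defs.v *)
(* Finite simple graphs: a symmetric irreflexive relation e on a finType T. *)
From mathcomp Require Import all_boot.
Set Implicit Arguments. Unset Strict Implicit. Unset Printing Implicit Defensive.

Section Graphs.
Variable T : finType.
Variable e : rel T.

Definition path_of_length (n : nat) (x y : T) : bool :=
  [exists s : n.-tuple T, [&& path e x s, last x s == y & uniq (x :: s)]].

(* d(x,y): length of a shortest x-y path; None encodes infinity
   (a simple path has fewer than #|T| edges, so searching 0..#|T|-1 suffices) *)
Definition dist (x y : T) : option nat :=
  let n := find (fun m => path_of_length m x y) (iota 0 #|T|) in
  if n < #|T| then Some n else None.

Definition dist_trunc (k : nat) (x y : T) : nat :=
  match dist x y with Some n => minn n k.+1 | None => k.+1 end.

Definition adj_resolving (A : {set T}) : Prop :=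
  forall x y : T, x != y -> exists2 z, z \in A & dist_trunc 1 x z != dist_trunc 1 y z.

Definition is_adim (k : nat) : Prop :=
  (exists A : {set T}, adj_resolving A /\ #|A| = k) /\
  (forall A : {set T}, adj_resolving A -> k <= #|A|).

Definition resolving_broadcast (f : T -> nat) : Prop :=
  forall x y : T, x != y ->
    exists z, 0 < f z /\ dist_trunc (f z) x z != dist_trunc (f z) y z.

Definition is_bdim (k : nat) : Prop :=
  (exists f : T -> nat, resolving_broadcast f /\ \sum_(v : T) f v = k) /\
  (forall f : T -> nat, resolving_broadcast f -> k <= \sum_(v : T) f v).

Definition is_clique (K : {set T}) : bool :=
  [forall x in K, forall y in K, (x != y) ==> e x y].

Definition clique_number : nat := \max_(K : {set T} | is_clique K) #|K|.

End Graphs.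

(* Main.v *)
Require Import Defs.
From mathcomp Require Import all_boot zify.
Set Implicit Arguments. Unset Strict Implicit. Unset Printing Implicit Defensive.

Section L.
Variables (T : finType) (e : rel T).

Lemma dist_Some x y n : dist e x y = Some n -> path_of_length e n x y /\ n < #|T|.
Proof.
rewrite /dist; case: ifP => // h [<-]; split => //.
have hs : has (fun m => path_of_length e m x y) (iota 0 #|T|) by rewrite has_find size_iota.
have := nth_find 0 hs; by rewrite nth_iota.
Qed.

Lemma pol_dist x y m : path_of_length e m x y -> exists2 d, dist e x y = Some d & d <= m.
Proof.
move=> hp; have hm : m < #|T|.
  move/existsP: hp => [s /and3P[_ _ hu]].
  move/card_uniqP: hu => hu.
  have := max_card (mem (x :: s)); rewrite hu /= size_tuple //.
have hf : find (fun m => path_of_length e m x y) (iota 0 #|T|) <= m.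
  rewrite leqNgt; apply/negP => /(before_find 0); rewrite nth_iota // add0n hp //.
exists (find (fun m => path_of_length e m x y) (iota 0 #|T|)) => //.
rewrite /dist ifT //; exact: leq_ltn_trans hf hm.
Qed.

Lemma pol_cons x y z n : e x y -> path_of_length e n y z ->
  exists2 m, m <= n.+1 & path_of_length e m x z.
Proof.
move=> exy /existsP[s /and3P[hps hl _]].
have hp : path e x (y :: s) by rewrite /= exy hps.
have : last x (y :: s) == z by [].
move: hp => /shortenP[p' hp' hu hsub] hl'.
exists (size p').
  move: (hu); rewrite cons_uniq => /andP[_ hu'].
  by rewrite (leq_trans (uniq_leq_size hu' hsub)) //= size_tuple.
apply/existsP; exists (in_tuple p'); by rewrite hp' hl' hu.
Qed.

Lemma dt_le i x y z : e x y -> dist_trunc e i x z <= (dist_trunc e i y z).+1.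
Proof.
move=> exy; rewrite /dist_trunc.
case hy: (dist e y z) => [n|]; last by case: (dist e x z) => [d|] //=; lia.
have [/(pol_cons exy) [m hm /pol_dist [d -> hd]] _] := dist_Some hy.
lia.
Qed.

Lemma clique_card f (K : {set T}) : resolving_broadcast e f -> is_clique e K ->
  #|K| <= 2 ^ (\sum_v f v).
Proof.
move=> hf hK.
have near i x y z : x \in K -> y \in K -> dist_trunc e i x z <= (dist_trunc e i y z).+1.
  move=> hx hy; case: (eqVneq x y) => [->|nxy]; first exact: leqnSn.
  apply: dt_le; move/forallP: hK => /(_ x); rewrite hx /= => /forallP /(_ y).
  by rewrite hy nxy.
case: (set_0Vmem K) => [->|[x0 hx0]]; first by rewrite cards0.
pose S := [set z | 0 < f z].
pose phi x := [set z | (0 < f z) && (dist_trunc e (f z) x z != dist_trunc e (f z) x0 z)].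
have inj : {in K &, injective phi}.
  move=> x y hx hy hxy; apply/eqP; apply/negPn/negP => nxy.
  have [z [fz hz]] := hf x y nxy.
  have := congr1 (fun A : {set T} => z \in A) hxy; rewrite /phi !inE fz /=.
  have := near (f z) x y z hx hy; have := near (f z) y x z hy hx.
  have := near (f z) x x0 z hx hx0; have := near (f z) x0 x z hx0 hx.
  have := near (f z) y x0 z hy hx0; have := near (f z) x0 y z hx0 hy.
  move: hz.
  case: (eqVneq (dist_trunc e (f z) x z) (dist_trunc e (f z) x0 z));
  case: (eqVneq (dist_trunc e (f z) y z) (dist_trunc e (f z) x0 z)); lia.
rewrite -(card_in_imset inj).
have hsub : phi @: K \subset powerset S.
  apply/subsetP => A /imsetP [x _ ->]; rewrite inE; apply/subsetP => z.
  by rewrite !inE => /andP[].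
apply: leq_trans (subset_leq_card hsub) _; rewrite card_powerset leq_pexp2l //.
rewrite (bigID (fun v => v \in S)) /= -[#|S|]addn0 leq_add //.
rewrite -sum1_card; apply: leq_sum => v; by rewrite inE.
Qed.

Lemma clique_num_le f : resolving_broadcast e f -> clique_number e <= 2 ^ (\sum_v f v).
Proof. by move=> hf; apply/bigmax_leqP => K hK; apply: clique_card. Qed.


Lemma dt1 x z : irreflexive e ->
  dist_trunc e 1 x z = if x == z then 0 else if e x z then 1 else 2.
Proof.
move=> irr.
have p0 : path_of_length e 0 x z -> x = z.
  by move=> /existsP[s /and3P[_ hl _]]; move: hl; case: s => [[|? ?] hs] //= /eqP.
have p1 : path_of_length e 1 x z -> e x z.
  move=> /existsP[s /and3P[hp hl _]]; move: hp hl; case: s => [[|w [|? ?]] hs] //=.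
  by rewrite andbT => ? /eqP <-.
case: (eqVneq x z) => [<-|nxz].
  have : path_of_length e 0 x x by apply/existsP; exists [tuple]; rewrite /= eqxx andbT.
  by case/pol_dist => d; rewrite /dist_trunc => ->; case: d.
rewrite /dist_trunc.
case ez: (e x z).
  have : path_of_length e 1 x z.
    by apply/existsP; exists [tuple z]; rewrite /= ez eqxx inE nxz.
  case/pol_dist => d hd; rewrite hd; case: d hd => [|[|d]] // /dist_Some [/p0 hxz _].
  by rewrite hxz eqxx in nxz.
case hd: (dist e x z) => [d|] //.
case: d hd => [|[|d]] // /dist_Some [hp _].
- by rewrite (p0 hp) eqxx in nxz.
- by rewrite (p1 hp) in ez.
Qed.

End L.

Lemma adj_broadcast (T : finType) (e : rel T) (A : {set T}) : adj_resolving e A ->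
  resolving_broadcast e (fun v => nat_of_bool (v \in A)) /\
  \sum_v nat_of_bool (v \in A) = #|A|.
Proof.
move=> hA; split.
  move=> x y nxy; have [z hz hd] := hA x y nxy; exists z; by rewrite hz.
rewrite (bigID (mem A)) /= -[#|A|]addn0 -sum1_card; congr (_ + _).
  by apply: eq_bigr => v /= ->.
by apply: big1 => v /negbTE /= ->.
Qed.

Definition VT (k : nat) : finType := ('I_k + {set 'I_k})%type.
Definition edge k (u v : VT k) : bool :=
  match u, v with
  | inl _, inl _ => false
  | inl i, inr Q1 => i \in Q1
  | inr Q1, inl i => i \in Q1
  | inr Q1, inr Q2 => Q1 != Q2
  end.

Lemma edge_sym k : symmetric (@edge k).
Proof. by move=> [i|Q1] [j|Q2] //=; rewrite eq_sym. Qed.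

Lemma edge_irr k : irreflexive (@edge k).
Proof. by move=> [i|Q1] //=; rewrite eqxx. Qed.

Definition Aset k : {set VT k} := [set inl i | i : 'I_k].

Lemma Aset_card k : #|Aset k| = k.
Proof. rewrite card_imset ?card_ord //; by move=> i j [->]. Qed.

Lemma Aset_res k : adj_resolving (@edge k) (Aset k).
Proof.
have inA i : (inl i : VT k) \in Aset k by apply/imsetP; exists i.
move=> x y nxy.
case: x nxy => [i|Q1] nxy.
  exists (inl i) => //; rewrite !dt1 ?eqxx ?(negbTE nxy) //; try exact: edge_irr.
  by rewrite (eq_sym y) (negbTE nxy); case: ifP.
case: y nxy => [j|Q2] nxy.
  exists (inl j) => //; rewrite !dt1 ?eqxx //; try exact: edge_irr.
  by case: ifP.
case: (boolP [exists i, (i \in Q1) != (i \in Q2)]) => [/existsP[i hi]|/existsPn h].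
  exists (inl i) => //; rewrite !dt1 /=; try exact: edge_irr.
  by move: hi; case: (i \in Q1); case: (i \in Q2).
have eSS : Q1 = Q2 by apply/setP => i; have := h i; rewrite negbK => /eqP.
by rewrite eSS eqxx in nxy.
Qed.

Definition Kset k : {set VT k} := inr @: powerset [set: 'I_k].

Lemma Kset_card k : #|Kset k| = 2 ^ k.
Proof. rewrite card_imset ?card_powerset ?cardsT ?card_ord //; by move=> i j [->]. Qed.

Lemma Kset_clique k : is_clique (@edge k) (Kset k).
Proof.
apply/forallP => x; apply/implyP => /imsetP[Q1 _ ->].
apply/forallP => y; apply/implyP => /imsetP[Q2 _ ->].
by apply/implyP.
Qed.

Theorem corollary3p7 (k : nat) : 1 <= k ->
  (forall (T : finType) (e : rel T), symmetric e -> irreflexive e ->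
     is_adim e k -> clique_number e <= 2 ^ k) /\
  (forall (T : finType) (e : rel T), symmetric e -> irreflexive e ->
     is_bdim e k -> clique_number e <= 2 ^ k) /\
  (exists (T : finType) (e : rel T), [/\ symmetric e, irreflexive e,
     is_adim e k, is_bdim e k & clique_number e = 2 ^ k]).
Proof.
move=> _; split.
  move=> T e _ _ [[A [hA <-]] _].
  have [hb hs] := adj_broadcast hA; rewrite -hs; exact: clique_num_le hb.
split.
  move=> T e _ _ [[f [hf <-]] _]; exact: clique_num_le hf.
have [hb hs] := adj_broadcast (@Aset_res k).
have hcl : clique_number (@edge k) = 2 ^ k.
  apply/eqP; rewrite eqn_leq; apply/andP; split.
    by have := clique_num_le hb; rewrite hs Aset_card.
  by have := @leq_bigmax_cond _ (@is_clique _ (@edge k)) (fun K : {set VT k} => #|K|) (Kset k) (@Kset_clique k); rewrite Kset_card.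
exists (VT k), (@edge k); split.
- exact: edge_sym.
- exact: edge_irr.
- split; first by exists (Aset k); split; [exact: Aset_res | exact: Aset_card].
  move=> A' hA'; have [hb' hs'] := adj_broadcast hA'.
  have := clique_num_le hb'; rewrite hs' hcl.
  by rewrite (leq_exp2l _ _ (ltnSn 1)).
- split; first by exists (fun v => nat_of_bool (v \in Aset k)); rewrite hs Aset_card.
  move=> f hf.
  have := clique_num_le hf; rewrite hcl.
  by rewrite (leq_exp2l _ _ (ltnSn 1)).
- exact: hcl.
Qed.
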